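(* $rx_3(K_{2,3})=rx_3(K_{2,4})=3$, and $rx_3(K_{2,t})\geq 4$ for every $t\geq 5$.
   Context: An edge coloring of a graph $G$ is any assignment of colors to the edges (adjacent edges may receive the same color). A tree $T$ in an edge-colored graph is a rainbow tree if no two edges of $T$ have the same color. For $S\subseteq V(G)$, an $S$-tree is a subtree of $G$ containing all vertices of $S$. A $3$-rainbow coloring of $G$ is an edge coloring such that for every set $S$ of $3$ vertices of $G$ there is a rainbow $S$-tree in $G$. The $3$-rainbow index $rx_3(G)$ is the minimum number of colors in a $3$-rainbow coloring of $G$. $K_{2,t}$ denotes the complete bipartite graph with parts of sizes $2$ and $t$. *)

(* Defs.v *)
From mathcomp Require Import all_boot.
Set Implicit Arguments. Unset Strict Implicit. Unset Printing Implicit Defensive.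

(* A simple graph on a finite vertex type V is given by a symmetric,
   irreflexive adjacency relation adj.  Edges are 2-element vertex sets. *)
Section Rainbow.
Variables (V : finType) (adj : rel V).

Definition edges : {set {set V}} :=
  [set e : {set V} | [exists x, exists y, adj x y && (e == [set x; y])]].

Definition vset (F : {set {set V}}) : {set V} := \bigcup_(e in F) e.

Definition frel (F : {set {set V}}) : rel V := fun a b => [set a; b] \in F.

Definition is_tree (F : {set {set V}}) : Prop :=
  [/\ F \subset edges,
      (forall x y, x \in vset F -> y \in vset F -> connect (frel F) x y)
    & ~ (exists p : seq V, [/\ uniq p, 2 < size p & cycle (frel F) p])].

(* An edge coloring is any map from edges to colors (values off edges are
   irrelevant). *)
Definition ncolors (c : {set V} -> nat) : nat :=
  size (undup [seq c e | e <- enum edges]).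

Definition rainbow_tree (c : {set V} -> nat) (F : {set {set V}}) : Prop :=
  {in F &, injective c}.

Definition three_rainbow (c : {set V} -> nat) : Prop :=
  forall S : {set V}, #|S| = 3 ->
    exists F : {set {set V}}, [/\ is_tree F, S \subset vset F & rainbow_tree c F].

Definition is_rx3 (k : nat) : Prop :=
  (exists c, three_rainbow c /\ ncolors c = k) /\
  (forall c, three_rainbow c -> k <= ncolors c).

End Rainbow.

Definition Kbip (m n : nat) : rel ('I_m + 'I_n)%type :=
  fun x y => match x, y with
             | inl _, inr _ | inr _, inl _ => true
             | _, _ => false
             end.
Arguments Kbip : clear implicits.

(* Main.v *)
Require Import Defs.
From mathcomp Require Import all_boot.
Set Implicit Arguments. Unset Strict Implicit. Unset Printing Implicit Defensive.

Section Gen.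
Variables (T : finType) (adj : rel T).

Lemma frel_sym (F : {set {set T}}) : symmetric (Defs.frel F).
Proof. by move=> x y; rewrite /Defs.frel setUC. Qed.

Lemma doubleton_eq (a b c d : T) : [set a; b] = [set c; d] ->
  (a = c /\ b = d) \/ (a = d /\ b = c).
Proof.
move=> H.
have Ha : a \in [set c; d] by rewrite -H set21.
have Hb : b \in [set c; d] by rewrite -H set22.
have Hc : c \in [set a; b] by rewrite H set21.
have Hd : d \in [set a; b] by rewrite H set22.
move: Ha Hb Hc Hd; rewrite !in_set2.
by do 4! (case/orP => /eqP ?); subst; auto.
Qed.

Definition branching (F : {set {set T}}) v :=
  exists u w, [/\ u != w, Defs.frel F v u & Defs.frel F v w].

Lemma acyclic2 (F : {set {set T}}) d1 d2 :
  (forall v, branching F v -> v = d1 \/ v = d2) ->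
  ~ (exists p : seq T, [/\ uniq p, 2 < size p & cycle (Defs.frel F) p]).
Proof.
move=> H [[|a [|b [|c r]]] [Hu Hs Hc]] //; clear Hs.
move: Hc; rewrite /= rcons_path /= => /and3P [Hab Hbc /andP [Hp Hl]].
have Hch : Defs.frel F c (head a r).
  by case: r Hu Hp Hl => [|d r] //= _ /andP [].
move: Hu; rewrite /= !inE !negb_or => /and3P [/and3P [Hab' Hac _] /andP [Hbc' Hbr] _].
have Ba : branching F a.
  exists b, (last c r); split => //; last by rewrite frel_sym.
  apply/eqP => Eb; have := mem_last c r; rewrite -Eb inE (negbTE Hbr) orbF.
  by move/eqP => E; rewrite E eqxx in Hbc'.
have Bb : branching F b.
  by exists a, c; split => //; rewrite frel_sym.
have Bc : branching F c.
  exists b, (head a r); split => //; last by rewrite frel_sym.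
  case: r Hch Hbr {Hl Hp Ba} => [|d r] /= _; first by rewrite eq_sym.
  by rewrite inE negb_or => /andP [].
case: (H _ Ba) => ?; case: (H _ Bb) => ?; case: (H _ Bc) => ?; subst;
  by rewrite ?eqxx in Hab' Hac Hbc'.
Qed.

Lemma vsetP (F : {set {set T}}) x :
  reflect (exists2 e, e \in F & x \in e) (x \in vset F).
Proof. exact: bigcupP. Qed.

Lemma tree_crit (F : {set {set T}}) z d1 d2 : F \subset edges adj ->
  (forall x, x \in vset F -> connect (Defs.frel F) x z) ->
  (forall v, branching F v -> v = d1 \/ v = d2) -> is_tree adj F.
Proof.
move=> HE Hc Hb; split => //; last exact: acyclic2 Hb.
move=> x y Hx Hy; apply: connect_trans (Hc _ Hx) _.
rewrite (sym_connect_sym (@frel_sym F)); exact: Hc.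
Qed.

Lemma star_tree z (L : {set T}) : (forall w, w \in L -> adj z w) ->
  is_tree adj [set [set z; w] | w in L].
Proof.
move=> HL; apply: (@tree_crit _ z z z).
- apply/subsetP => e /imsetP [w Hw ->]; rewrite /edges inE.
  by apply/existsP; exists z; apply/existsP; exists w; rewrite HL ?eqxx.
- move=> x /vsetP [e /imsetP [w Hw ->]]; rewrite in_set2 => /orP [] /eqP ->.
    exact: connect0.
  by apply: connect1; rewrite /Defs.frel setUC; apply/imsetP; exists w.
- move=> v [u [w [Huw Hu Hw]]]; left; apply/eqP/negP => Hv.
  move: Hu Hw; rewrite /Defs.frel => /imsetP [u' _ /doubleton_eq Eu] /imsetP [w' _ /doubleton_eq Ew].
  case: Eu => [[Ev _]|[_ Eu]]; first by rewrite Ev eqxx in Hv.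
  case: Ew => [[Ev _]|[_ Ew]]; first by rewrite Ev eqxx in Hv.
  by rewrite Eu Ew eqxx in Huw.
Qed.

Lemma star_vset z (L : {set T}) x : x \in z |: L -> L != set0 ->
  x \in vset [set [set z; w] | w in L].
Proof.
rewrite in_setU1 => /orP [/eqP ->|Hx] /set0Pn [w Hw].
  by apply/vsetP; exists [set z; w]; [apply/imsetP; exists w|rewrite set21].
by apply/vsetP; exists [set z; x]; [apply/imsetP; exists x|rewrite set22].
Qed.

Lemma star_rainbow (c : {set T} -> nat) z (L : {set T}) :
  {in L &, forall w w', c [set z; w] = c [set z; w'] -> w = w'} ->
  rainbow_tree c [set [set z; w] | w in L].
Proof.
move=> H e e' /imsetP [w Hw ->] /imsetP [w' Hw' ->] E.
by rewrite (H _ _ Hw Hw' E).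
Qed.

Section Path.
Variables a b c d : T.
Hypotheses (Hab : adj a b) (Hbc : adj b c) (Hcd : adj c d).
Hypotheses (Nab : a != b) (Nac : a != c) (Nad : a != d) (Nbc : b != c)
  (Nbd : b != d) (Ncd : c != d).
Definition pathF : {set {set T}} := [set [set a; b]; [set b; c]; [set c; d]].

Lemma path_nbr v u : Defs.frel pathF v u -> v != b -> v != c ->
  (v = a /\ u = b) \/ (v = d /\ u = c).
Proof.
rewrite /Defs.frel /pathF !inE => /orP [/orP []|] /eqP /doubleton_eq;
  move=> [] [-> ->] Hb Hc; rewrite ?eqxx in Hb Hc; try by [];  auto.
Qed.

Lemma path_tree : is_tree adj pathF.
Proof.
have Hfr : forall x y, [set x; y] \in pathF -> Defs.frel pathF y x.
  by move=> x y; rewrite /Defs.frel setUC.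
apply: (@tree_crit _ b b c).
- apply/subsetP => e; rewrite /pathF !inE => /orP [/orP []|] /eqP ->;
  apply/existsP; [exists a|exists b|exists c]; apply/existsP;
  [exists b|exists c|exists d]; by rewrite eqxx andbT ?Hab ?Hbc ?Hcd.
- have Ha : connect (Defs.frel pathF) a b by apply: connect1; rewrite /Defs.frel !inE eqxx.
  have Hc : connect (Defs.frel pathF) c b by apply: connect1; apply: Hfr; rewrite !inE eqxx orbT.
  have Hd : connect (Defs.frel pathF) d b.
    apply: connect_trans Hc; apply: connect1; apply: Hfr; rewrite !inE eqxx !orbT //.
  move=> x /vsetP [e]; rewrite /pathF !inE => /orP [/orP []|] /eqP -> /[!inE] /orP [] /eqP -> //.
- move=> v [u [w [Huw Hu Hw]]].
  case: (eqVneq v b) => [->|Hvb]; first by left.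
  case: (eqVneq v c) => [->|Hvc]; first by right.
  have := path_nbr Hu Hvb Hvc; have := path_nbr Hw Hvb Hvc.
  move=> [] [Ev1 E1] [] [Ev2 E2]; try by rewrite E1 E2 eqxx in Huw.
  all: by move: Nad; rewrite -Ev1 -Ev2 eqxx.
Qed.

Lemma path_vset x : x \in [set a; b; c; d] -> x \in vset pathF.
Proof.
rewrite !inE => /orP [/orP [/orP []|]|] /eqP ->; apply/vsetP.
- by exists [set a; b]; rewrite !inE ?eqxx.
- by exists [set a; b]; rewrite !inE ?eqxx ?orbT.
- by exists [set b; c]; rewrite !inE ?eqxx ?orbT.
- by exists [set c; d]; rewrite !inE ?eqxx ?orbT.
Qed.

Lemma path_rainbow (col : {set T} -> nat) :
  col [set a; b] != col [set b; c] -> col [set a; b] != col [set c; d] ->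
  col [set b; c] != col [set c; d] -> rainbow_tree col pathF.
Proof.
move=> H1 H2 H3 e e'; rewrite /pathF !inE => /orP [/orP []|] /eqP -> /orP [/orP []|] /eqP -> E //;
  by rewrite E eqxx in H1 H2 H3.
Qed.
End Path.
End Gen.

Section K.
Variable t : nat.
Local Notation V := ('I_2 + 'I_t)%type.
Local Notation G := (Kbip 2 t).
Definition ed (a : 'I_2) (j : 'I_t) : {set V} := [set inl a; inr j].

Lemma edgesP e : reflect (exists a j, e = ed a j) (e \in edges G).
Proof.
rewrite inE; apply: (iffP existsP) => [[x /existsP [y /andP [Hxy /eqP ->]]] | [a [j ->]]].
  case: x y Hxy => [a|j] [b|k] //= _; first by exists a, k.
  by exists b, j; rewrite /ed setUC.
by exists (inl a); apply/existsP; exists (inr j); rewrite /ed eqxx.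
Qed.

Lemma in_edl a j (a' : 'I_2) : (inl a' \in ed a j) = (a' == a).
Proof. by rewrite !inE /= orbF. Qed.
Lemma in_edr a j (j' : 'I_t) : (inr j' \in ed a j) = (j' == j).
Proof. by rewrite !inE. Qed.

Lemma ed_inj a j a' j' : ed a j = ed a' j' -> a = a' /\ j = j'.
Proof.
move=> E; have Ha : inl a \in ed a' j' by rewrite -E in_edl.
have Hj : inr j \in ed a' j' by rewrite -E in_edr.
by move: Ha Hj; rewrite in_edl in_edr => /eqP -> /eqP ->.
Qed.

Lemma pick_edge (F : {set {set V}}) j : F \subset edges G -> inr j \in vset F ->
  exists a, ed a j \in F.
Proof.
move=> /subsetP HF /bigcupP [e He Hj]; have /edgesP [a [j' Ee]] := HF _ He.
by exists a; move: Hj; rewrite Ee in_edr => /eqP E; rewrite E -Ee.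
Qed.

Lemma card3 (T : finType) (x y z : T) : x != y -> x != z -> y != z ->
  #|[set x; y; z]| = 3.
Proof.
move=> Hxy Hxz Hyz.
by rewrite setUC cardsU1 cards2 !inE Hxy eq_sym (negbTE Hxz) eq_sym (negbTE Hyz).
Qed.

Lemma rainbow_le (c : {set V} -> nat) (F : {set {set V}}) : F \subset edges G -> rainbow_tree c F ->
  #|F| <= ncolors G c.
Proof.
move=> /subsetP HF Hr; rewrite cardE -(size_map c) /ncolors.
apply: uniq_leq_size.
  by rewrite map_inj_in_uniq ?enum_uniq // => e e'; rewrite !mem_enum; apply: Hr.
move=> x /mapP [e He ->]; rewrite mem_undup; apply: map_f.
by rewrite mem_enum HF // -mem_enum.
Qed.

Lemma three_edges (F : {set {set V}}) i j k : i != j -> i != k -> j != k ->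
  F \subset edges G -> [set inr i; inr j; inr k] \subset vset F ->
  exists ai aj ak, [/\ ed ai i \in F, ed aj j \in F, ed ak k \in F &
     [set ed ai i; ed aj j; ed ak k] \subset F /\ #|[set ed ai i; ed aj j; ed ak k]| = 3].
Proof.
move=> Hij Hik Hjk HF /subsetP HS.
have Si : inr i \in ([set inr i; inr j; inr k] : {set V}) by rewrite !inE eqxx.
have Sj : inr j \in ([set inr i; inr j; inr k] : {set V}) by rewrite !inE eqxx orbT.
have Sk : inr k \in ([set inr i; inr j; inr k] : {set V}) by rewrite !inE eqxx !orbT.
have [ai Hi] := pick_edge HF (HS _ Si).
have [aj Hj] := pick_edge HF (HS _ Sj).
have [ak Hk] := pick_edge HF (HS _ Sk).
exists ai, aj, ak; split => //; split.
  by apply/subsetP => e; rewrite !inE => /orP [/orP []|] /eqP ->.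
have N : forall a b (p q : 'I_t), p != q -> ed a p != ed b q.
  by move=> a b p q Hpq; apply/eqP => /ed_inj [_ E]; rewrite E eqxx in Hpq.
by rewrite card3 ?N.
Qed.


Lemma isolate (F : {set {set V}}) a i y :
  (forall e, e \in F -> e != ed a i -> (inl a \notin e) && (inr i \notin e)) ->
  connect (Defs.frel F) (inr i) y -> y \in ed a i.
Proof.
move=> H Hc; have Hcl : closed (Defs.frel F) (ed a i).
  apply: (intro_closed (sym_connect_sym (@frel_sym _ F))) => x z Hxz Hx.
  case: (eqVneq [set x; z] (ed a i)) => [E|N]; first by rewrite -E set22.
  have /andP [H1 H2] := H _ Hxz N.
  move: Hx; rewrite /ed in_set2 => /orP [] /eqP Ex; [move: H1 | move: H2];
    by rewrite -Ex set21.
by rewrite -(closed_connect Hcl Hc) in_edr.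
Qed.

Lemma inr_neq (i j : 'I_t) : i != j -> (inr i : V) != inr j.
Proof. by []. Qed.

Lemma row_rainbow (c : {set V} -> nat) : ncolors G c <= 3 -> three_rainbow G c ->
  forall i j k : 'I_t, i != j -> i != k -> j != k ->
  exists a, [/\ c (ed a i) != c (ed a j), c (ed a i) != c (ed a k)
              & c (ed a j) != c (ed a k)].
Proof.
move=> Hn Hc i j k Hij Hik Hjk.
have [F [[HE Hconn _] HS Hr]] :=
  Hc [set inr i; inr j; inr k] (card3 (inr_neq Hij) (inr_neq Hik) (inr_neq Hjk)).
have [ai [aj [ak [Hi Hj Hk [Hsub Hcard]]]]] := three_edges Hij Hik Hjk HE HS.
have EF : F = [set ed ai i; ed aj j; ed ak k].
  apply/eqP; rewrite eq_sym eqEcard Hsub Hcard; exact: leq_trans (rainbow_le HE Hr) Hn.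
have inv : forall p, p \in [:: i; j; k] -> inr p \in vset F.
  move=> p Hp; apply: (subsetP HS); move: Hp; rewrite !inE => /orP [|/orP []] /eqP ->;
    by rewrite eqxx ?orbT.
have key : forall p q r (ap aq ar : 'I_2),
    (forall e, e \in F -> [\/ e = ed ap p, e = ed aq q | e = ed ar r]) ->
    p != q -> p != r -> ap != aq -> ap != ar ->
    p \in [:: i; j; k] -> q \in [:: i; j; k] -> False.
  move=> p q r ap aq ar HF Hpq Hpr Hapq Hapr Hp Hq.
  suff: inr q \in ed ap p by rewrite in_edr eq_sym (negbTE Hpq).
  apply: isolate (Hconn _ _ (inv _ Hp) (inv _ Hq)).
  move=> e He Ne; case: (HF _ He) => Ee; rewrite Ee in Ne *; first by rewrite eqxx in Ne.
    by rewrite in_edl in_edr Hapq Hpq.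
  by rewrite in_edl in_edr Hapr Hpr.
have HF : forall e, e \in F -> [\/ e = ed ai i, e = ed aj j | e = ed ak k].
  move=> e; rewrite EF !inE => /orP [/orP []|] /eqP; auto using Or31, Or32, Or33.
have HF2 : forall e, e \in F -> [\/ e = ed aj j, e = ed ai i | e = ed ak k].
  by move=> e /HF [] ?; auto using Or31, Or32, Or33.
have HF3 : forall e, e \in F -> [\/ e = ed ak k, e = ed ai i | e = ed aj j].
  by move=> e /HF [] ?; auto using Or31, Or32, Or33.
have mi : i \in [:: i; j; k] by rewrite !inE eqxx.
have mj : j \in [:: i; j; k] by rewrite !inE eqxx orbT.
have mk : k \in [:: i; j; k] by rewrite !inE eqxx !orbT.
have eij : ai = aj.
  case: (eqVneq ai aj) => // N; case: (eqVneq ai ak) => [E|N'].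
    have Nji : j != i by rewrite eq_sym.
    have N2 : aj != ai by rewrite eq_sym.
    have N3 : aj != ak by rewrite -E eq_sym.
    by case: (key _ _ _ _ _ _ HF2 Nji Hjk N2 N3 mj mi).
  by case: (key _ _ _ _ _ _ HF Hij Hik N N' mi mj).
have eik : ai = ak.
  case: (eqVneq ai ak) => // N.
  have Nki : k != i by rewrite eq_sym.
  have Nkj : k != j by rewrite eq_sym.
  have N2 : ak != ai by rewrite eq_sym.
  have N3 : ak != aj by rewrite -eij eq_sym.
  by case: (key _ _ _ _ _ _ HF3 Nki Nkj N2 N3 mk mi).
exists ai; rewrite -eij in Hj; rewrite -eik in Hk.
have Ninj : forall p q, p != q -> ed ai p \in F -> ed ai q \in F ->
    c (ed ai p) != c (ed ai q).
  move=> p q Npq Hp Hq; apply/eqP => /(Hr _ _ Hp Hq) /ed_inj [_ E].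
  by rewrite E eqxx in Npq.
by split; apply: Ninj.
Qed.
End K.

Fixpoint tups n : seq (seq nat) :=
  if n is n'.+1 then [seq x :: s | x <- iota 0 3, s <- tups n'] else [:: [::]].

Lemma tups_S n : tups n.+1 = [seq x :: s | x <- iota 0 3, s <- tups n].
Proof. by []. Qed.

Lemma tupsP s : all (fun x => x < 3) s -> s \in tups (size s).
Proof.
elim: s => [|x s IH]; first by [].
rewrite [all _ _]/= => /andP [Hx Hs].
rewrite [size _]/= tups_S.
apply/allpairsPdep; exists x, s; split => //; last exact: IH.
by rewrite mem_iota.
Qed.

Definition trips : seq (nat * nat * nat) :=
  [:: (0,1,2); (0,1,3); (0,1,4); (0,2,3); (0,2,4); (0,3,4); (1,2,3); (1,2,4); (1,3,4); (2,3,4)].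

Definition inj3 (s : seq nat) (tr : nat * nat * nat) :=
  [&& nth 0 s tr.1.1 != nth 0 s tr.1.2, nth 0 s tr.1.1 != nth 0 s tr.2
    & nth 0 s tr.1.2 != nth 0 s tr.2].

Lemma comp_check : all (fun f => all (fun g =>
   has (fun tr => ~~ inj3 f tr && ~~ inj3 g tr) trips) (tups 5)) (tups 5).
Proof. vm_compute. reflexivity. Qed.

Lemma idx_eq (C : seq nat) x y : x \in C -> y \in C -> (index x C == index y C) = (x == y).
Proof.
move=> Hx Hy; apply/eqP/eqP => [E|-> //].
by rewrite -(nth_index 0 Hx) E nth_index.
Qed.

Lemma lb4 t : 5 <= t -> forall c : {set ('I_2 + 'I_t)%type} -> nat,
  three_rainbow (Kbip 2 t) c -> 4 <= ncolors (Kbip 2 t) c.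
Proof.
case: t => [//|t] Ht c Hc; rewrite ltnNge; apply/negP => Hn.
set C := undup [seq c e | e <- enum (edges (Kbip 2 t.+1))].
have sC : size C <= 3 by [].
pose row (a : 'I_2) n := c (ed a (inord n)).
have memC : forall a n, row a n \in C.
  move=> a n; rewrite mem_undup; apply: map_f; rewrite mem_enum.
  by apply/edgesP; exists a, (inord n).
pose f a := [seq index (row a n) C | n <- iota 0 5].
have fall : forall a, all (fun x => x < 3) (f a).
  move=> a; apply/allP => x /mapP [n _ ->].
  by apply: leq_trans sC; rewrite index_mem.
have fsz : forall a, size (f a) = 5 by move=> a; rewrite size_map size_iota.
have fin : forall a, f a \in tups 5 by move=> a; rewrite -(fsz a); apply: tupsP.
pose a0 : 'I_2 := @Ordinal 2 0 isT.
pose a1 : 'I_2 := @Ordinal 2 1 isT.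
have := comp_check => /allP /(_ _ (fin a0)) /allP /(_ _ (fin a1)) /hasP [[[p q] r] Htr Hbad].
have Hall : all (fun tr => [&& tr.1.1 < tr.1.2, tr.1.2 < tr.2 & tr.2 < 5]) trips by [].
have /and3P [Hpq Hqr Hr5] := allP Hall _ Htr.
have Hq5 : q < 5 by apply: ltn_trans Hqr Hr5.
have Hp5 : p < 5 by apply: ltn_trans Hpq Hq5.
have lt : forall n, n < 5 -> n < t.+1 by move=> n Hn5; apply: leq_trans Hn5 Ht.
have nthf : forall a n, n < 5 -> nth 0 (f a) n = index (row a n) C.
  by move=> a n Hn5; rewrite (nth_map 0) ?size_iota // nth_iota.
have Ni : forall m n, m < n -> n < 5 -> (inord m : 'I_t.+1) != inord n.
  move=> m n Hmn Hn5; apply/eqP => /(congr1 (@nat_of_ord _)).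
  rewrite !inordK ?lt //; last by apply: ltn_trans Hmn Hn5.
  by move=> E; rewrite E ltnn in Hmn.
have [a [H1 H2 H3]] := row_rainbow Hn Hc (Ni _ _ Hpq Hq5)
  (Ni _ _ (ltn_trans Hpq Hqr) Hr5) (Ni _ _ Hqr Hr5).
have inj : forall a, ~~ inj3 (f a) (p, q, r) -> ~~ [&& row a p != row a q,
    row a p != row a r & row a q != row a r].
  by move=> b; rewrite /inj3 /= !nthf // !idx_eq.
have Ha : a = a0 \/ a = a1.
  by case: a {H1 H2 H3} => [[|[|//]] Ha]; [left|right]; apply: val_inj.
move/andP: Hbad => [Hf0 Hf1].
by case: Ha => Ea; subst a; [move: (inj _ Hf0) | move: (inj _ Hf1)];
  rewrite /row H1 H2 H3.
Qed.

Lemma lb3 t : 3 <= t -> forall c : {set ('I_2 + 'I_t)%type} -> nat,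
  three_rainbow (Kbip 2 t) c -> 3 <= ncolors (Kbip 2 t) c.
Proof.
case: t => [//|t] Ht c Hc.
have Ni : forall m n, m < n -> n < 3 -> (inord m : 'I_t.+1) != inord n.
  move=> m n Hmn Hn5; apply/eqP => /(congr1 (@nat_of_ord _)).
  have lt : forall n, n < 3 -> n < t.+1 by move=> k Hk; apply: leq_trans Hk Ht.
  rewrite !inordK ?lt //; last by apply: ltn_trans Hmn Hn5.
  by move=> E; rewrite E ltnn in Hmn.
have N01 := Ni 0 1 isT isT; have N02 := Ni 0 2 isT isT; have N12 := Ni 1 2 isT isT.
have [F [[HE _ _] HS Hr]] := Hc _ (card3 (inr_neq N01) (inr_neq N02) (inr_neq N12)).
have [ai [aj [ak [_ _ _ [Hsub Hcard]]]]] := three_edges N01 N02 N12 HE HS.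
rewrite -Hcard; apply: leq_trans (subset_leq_card Hsub) _.
exact: rainbow_le.
Qed.

Section U.
Variable t : nat.
Local Notation V := ('I_2 + 'I_t)%type.
Local Notation G := (Kbip 2 t).
Variable r : 'I_2 -> 'I_t -> nat.

Definition col (e : {set V}) : nat :=
  if [pick p : 'I_2 * 'I_t | e == ed p.1 p.2] is Some p then r p.1 p.2 else 0.

Lemma colE a j : col (ed a j) = r a j.
Proof.
rewrite /col; case: pickP => [[a' j'] /= /eqP /ed_inj [<- <-] //|/(_ (a, j))].
by rewrite eqxx.
Qed.

Definition good (S : {set V}) :=
  exists F, [/\ is_tree G F, S \subset vset F & rainbow_tree col F].

Lemma good_sub (S S' : {set V}) : S' \subset S -> good S -> good S'.
Proof.
move=> Hs [F [H1 H2 H3]]; exists F; split => //; exact: subset_trans Hs H2.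
Qed.

Lemma star_left a (B : {set 'I_t}) : {in B &, injective (r a)} -> B != set0 ->
  good (inl a |: [set inr j | j in B]).
Proof.
move=> Hi Hn; exists [set [set inl a; w] | w in [set inr j | j in B]]; split.
- by apply: star_tree => w /imsetP [j _ ->].
- apply/subsetP => x Hx; apply: star_vset Hx _.
  by case/set0Pn: Hn => j Hj; apply/set0Pn; exists (inr j); apply: imset_f.
- apply: star_rainbow => w w' /imsetP [j Hj ->] /imsetP [j' Hj' ->].
  by rewrite -/(ed a j) -/(ed a j') !colE => /(Hi _ _ Hj Hj') ->.
Qed.

Lemma good_rrr a (i j k : 'I_t) : i != j -> i != k -> j != k ->
  [/\ r a i != r a j, r a i != r a k & r a j != r a k] ->
  good [set inr i; inr j; inr k].
Proof.
move=> Hij Hik Hjk [H1 H2 H3].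
apply: good_sub (star_left (B := [set i; j; k]) (a := a) _ _).
  by apply/subsetP => x; rewrite !inE => /orP [/orP []|] /eqP ->;
    rewrite ?eqxx ?orbT // imset_f // !inE eqxx ?orbT.
- move=> x y; rewrite !inE => /orP [/orP []|] /eqP -> /orP [/orP []|] /eqP -> E //;
  by rewrite E eqxx in H1 H2 H3.
- by apply/set0Pn; exists i; rewrite !inE eqxx.
Qed.


Lemma good_lrr a (i j : 'I_t) : i != j ->
  (r a i != r a j \/ exists2 a', a' != a &
     [/\ r a' j != r a' i, r a' j != r a i & r a' i != r a i]) ->
  good [set inl a; inr i; inr j].
Proof.
move=> Hij [Hn|[a' Ha' [H1 H2 H3]]].
  apply: good_sub (star_left (B := [set i; j]) (a := a) _ _).
  + apply/subsetP => x; rewrite !inE => /orP [/orP []|] /eqP ->;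
      rewrite ?eqxx ?orbT // imset_f // !inE eqxx ?orbT ?orTb //.
  + move=> x y; rewrite !inE => /orP [] /eqP -> /orP [] /eqP -> E //;
      by rewrite E eqxx in Hn.
  + by apply/set0Pn; exists i; rewrite !inE eqxx.
have Nji : (inr j : V) != inr i by apply: inr_neq; rewrite eq_sym.
have Naa : (inl a' : V) != inl a by [].
exists (pathF (inr j) (inl a') (inr i) (inl a)); split.
- by apply: path_tree.
- apply/subsetP => x Hx; apply: path_vset; move: Hx;
    rewrite !inE => /orP [/orP []|] /eqP ->; rewrite eqxx ?orbT ?orTb //.
- have cE : forall c (k : 'I_t), col [set inr k; inl c] = r c k.
    by move=> c k; rewrite setUC -/(ed c k) colE.
  have cE2 : forall c (k : 'I_t), col [set inl c; inr k] = r c k by exact: colE.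
  by apply: path_rainbow; rewrite ?cE ?cE2.
Qed.

Lemma good_llr a b (j : 'I_t) : a != b -> r a j != r b j ->
  good [set inl a; inl b; inr j].
Proof.
move=> Hab Hr.
have cE : forall c, col [set inr j; inl c] = r c j.
  by move=> c; rewrite setUC -/(ed c j) colE.
exists [set [set inr j; w] | w in [set inl a; inl b]]; split.
- by apply: star_tree => w; rewrite !inE => /orP [] /eqP ->.
- apply/subsetP => x Hx; apply: star_vset; last by apply/set0Pn; exists (inl a); rewrite !inE eqxx.
  by move: Hx; rewrite !inE => /orP [/orP []|] ->; rewrite ?orbT.
- apply: star_rainbow => w w'; rewrite !inE => /orP [] /eqP -> /orP [] /eqP ->;
    rewrite !cE // => E; by rewrite E eqxx in Hr.
Qed.

Lemma set3C1 (T : finType) (x y z : T) : [set x; y; z] = [set y; x; z].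
Proof. by apply/setP => v; rewrite !inE (orbC (v == x)). Qed.
Lemma set3C2 (T : finType) (x y z : T) : [set x; y; z] = [set x; z; y].
Proof. by apply/setP => v; rewrite !inE -!orbA (orbC (v == y)). Qed.

Lemma card3P (T : finType) (S : {set T}) : #|S| = 3 ->
  exists x y z, [/\ x != y, x != z, y != z & S = [set x; y; z]].
Proof.
move=> HS; have : S != set0 by rewrite -card_gt0 HS.
case/set0Pn => x Hx.
have /cards2P [y [z [Nyz E]]] : #|S :\ x| == 2.
  by move: HS; rewrite (cardsD1 x) Hx add1n => [[->]].
have Hy : y \in S :\ x by rewrite E set21.
have Hz : z \in S :\ x by rewrite E set22.
move: Hy Hz; rewrite !in_setD1 => /andP [Nyx _] /andP [Nzx _].
exists x, y, z; split => //; try by rewrite eq_sym.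
by rewrite -{1}(setD1K Hx) E setUA.
Qed.

Lemma suff3 :
  (forall i j k : 'I_t, i != j -> i != k -> j != k ->
     exists a, [/\ r a i != r a j, r a i != r a k & r a j != r a k]) ->
  (forall a (i j : 'I_t), i != j -> r a i != r a j \/ exists2 a', a' != a &
     [/\ r a' j != r a' i, r a' j != r a i & r a' i != r a i]) ->
  (forall a b j, a != b -> r a j != r b j) ->
  three_rainbow G col.
Proof.
move=> H1 H2 H3 S HS.
have [x [y [z [Nxy Nxz Nyz ->]]]] := card3P HS.
suff : good [set x; y; z] by [].
case: x y z Nxy Nxz Nyz => [a|i] [b|j] [c|k] Nxy Nxz Nyz.
- by move: a b c Nxy Nxz Nyz => [[|[|//]] ?] [[|[|//]] ?] [[|[|//]] ?].
- exact: good_llr (H3 _ _ _ Nxy).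
- by rewrite set3C2; apply: good_llr (H3 _ _ _ Nxz).
- by apply: good_lrr; [|apply: H2].
- by rewrite set3C1 set3C2; apply: good_llr (H3 _ _ _ Nyz).
- by rewrite set3C1; apply: good_lrr; [|apply: H2].
- by rewrite set3C2 set3C1; apply: good_lrr; [|apply: H2].
- have [a Ha] := H1 _ _ _ Nxy Nxz Nyz; exact: good_rrr Ha.
Qed.

End U.

Lemma ncolors_col t (r : 'I_2 -> 'I_t -> nat) (l : seq nat) : uniq l ->
  (forall a j, r a j \in l) -> (forall x, x \in l -> exists a j, r a j = x) ->
  ncolors (Kbip 2 t) (col r) = size l.
Proof.
move=> Hl H1 H2; rewrite /ncolors.
have E : l =i undup [seq col r e | e <- enum (edges (Kbip 2 t))].
  move=> x; rewrite mem_undup; apply/idP/mapP => [/H2 [a [j <-]]|[e]].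
    by exists (ed a j); rewrite ?colE // mem_enum; apply/edgesP; exists a, j.
  by rewrite mem_enum => /edgesP [a [j ->]] ->; rewrite colE.
by have := uniq_size_uniq Hl E; rewrite undup_uniq => /esym/eqP.
Qed.

Definition r3 (a : 'I_2) (j : 'I_3) : nat := nth 0 (nth [::] [:: [:: 0; 1; 2]; [:: 1; 2; 0]] a) j.
Definition r4 (a : 'I_2) (j : 'I_4) : nat := nth 0 (nth [::] [:: [:: 0; 1; 2; 0]; [:: 1; 0; 0; 2]] a) j.

Lemma tr3 : three_rainbow (Kbip 2 3) (col r3).
Proof.
apply: suff3.
- move=> [[|[|[|//]]] ?] [[|[|[|//]]] ?] [[|[|[|//]]] ?] //= _ _ _;
  solve [exists ord0; by split | exists ord_max; by split].
- move=> [[|[|//]] ?] [[|[|[|//]]] ?] [[|[|[|//]]] ?] //= _;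
  solve [left; by [] | right; exists ord0; by split | right; exists ord_max; by split].
- by move=> [[|[|//]] ?] [[|[|//]] ?] [[|[|[|//]]] ?].
Qed.

Lemma tr4 : three_rainbow (Kbip 2 4) (col r4).
Proof.
apply: suff3.
- move=> [[|[|[|[|//]]]] ?] [[|[|[|[|//]]]] ?] [[|[|[|[|//]]]] ?] //= _ _ _;
  solve [exists ord0; by split | exists ord_max; by split].
- move=> [[|[|//]] ?] [[|[|[|[|//]]]] ?] [[|[|[|[|//]]]] ?] //= _;
  solve [left; by [] | right; exists ord0; by split | right; exists ord_max; by split].
- by move=> [[|[|//]] ?] [[|[|//]] ?] [[|[|[|[|//]]]] ?].
Qed.

Lemma nc3 : ncolors (Kbip 2 3) (col r3) = 3.
Proof.
apply: (ncolors_col (l := [:: 0; 1; 2])) => //.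
- by move=> [[|[|//]] ?] [[|[|[|//]]] ?]; rewrite /r3 /= !inE.
- move=> x; rewrite !inE => /orP [|/orP []] /eqP ->.
  + by exists ord0, ord0.
  + by exists ord0, (Ordinal (isT : 1 < 3)).
  + by exists ord0, (Ordinal (isT : 2 < 3)).
Qed.

Lemma nc4 : ncolors (Kbip 2 4) (col r4) = 3.
Proof.
apply: (ncolors_col (l := [:: 0; 1; 2])) => //.
- by move=> [[|[|//]] ?] [[|[|[|[|//]]]] ?]; rewrite /r4 /= !inE.
- move=> x; rewrite !inE => /orP [|/orP []] /eqP ->.
  + by exists ord0, ord0.
  + by exists ord0, (Ordinal (isT : 1 < 4)).
  + by exists ord0, (Ordinal (isT : 2 < 4)).
Qed.

Theorem lemma3 :
  [/\ is_rx3 (Kbip 2 3) 3,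
      is_rx3 (Kbip 2 4) 3 &
      forall t : nat, 5 <= t ->
        forall c : {set ('I_2 + 'I_t)%type} -> nat,
          three_rainbow (Kbip 2 t) c -> 4 <= ncolors (Kbip 2 t) c].
Proof.
split.
- split; first by exists (col r3); split; [exact: tr3 | exact: nc3].
  by move=> c; apply: lb3.
- split; first by exists (col r4); split; [exact: tr4 | exact: nc4].
  by move=> c; apply: lb3.
- exact: lb4.
Qed.
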